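(* Let $r \in \mathbb{Q}_{>0}$ be such that $S_r$ is atomic. Then the set of elasticities $R(S_r)$ is dense in $\mathbb{R}_{\ge 1}$ if and only if $r \in \mathbb{Q}_{>1} \setminus \mathbb{N}$.
   Context: For $q \in \mathbb{Q}_{>0}$, $\mathsf{n}(q),\mathsf{d}(q)$ are the positive coprime integers with $q = \mathsf{n}(q)/\mathsf{d}(q)$. $S_r$ is the additive submonoid of $(\mathbb{Q}_{\ge 0},+)$ generated by $\{r^n : n \in \mathbb{N}_0\}$; it is atomic exactly when $r=1$ or $\mathsf{n}(r)>1$. $\mathsf{L}(x)$ denotes the set of lengths of factorizations of $x$ into atoms. The elasticity of $x \ne 0$ is $\rho(x) = \sup \mathsf{L}(x)/\inf \mathsf{L}(x) \in \mathbb{Q}_{\ge 1}\cup\{\infty\}$, $\rho(0)=1$, and $R(S_r) = \{\rho(x) : x \in S_r\}$ (density is understood for $R(S_r) \setminus \{\infty\}$ as a subset of $\mathbb{R}_{\ge 1}$). *)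

(* Defs.v *)
From HB Require Import structures.
From mathcomp Require Import all_boot all_order all_algebra.
From Stdlib Require Reals ZArith.
Set Implicit Arguments. Unset Strict Implicit. Unset Printing Implicit Defensive.
Import Order.TTheory GRing.Theory Num.Theory.
Local Open Scope ring_scope.

Definition in_S (r x : rat) : Prop := exists s : seq nat, x = \sum_(n <- s) r ^+ n.

(* atoms of S_r: non-units (i.e. nonzero, the monoid being reduced) that do
   not split as a sum of two nonzero elements of S_r *)
Definition atom (r a : rat) : Prop :=
  in_S r a /\ a != 0 /\
  forall b c, in_S r b -> in_S r c -> a = b + c -> b = 0 \/ c = 0.

Definition is_factorization (r x : rat) (s : seq rat) : Prop :=
  (forall a, a \in s -> atom r a) /\ x = \sum_(a <- s) a.

Definition in_L (r x : rat) (l : nat) : Prop :=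
  exists s, is_factorization r x s /\ size s = l.

Definition atomic (r : rat) : Prop :=
  forall x, in_S r x -> x != 0 -> exists s, is_factorization r x s.

(* q \in R(S_r) \ {infinity}: q = rho(x) < infinity for some x in S_r *)
Definition finite_elasticity (r q : rat) : Prop :=
  exists x, in_S r x /\
    ((x = 0 /\ q = 1) \/
     (x != 0 /\ exists lo hi : nat,
        [/\ in_L r x lo, in_L r x hi,
            (forall l, in_L r x l -> (lo <= l <= hi)%N) &
            q = hi%:R / lo%:R])).

Definition int_to_Z (z : int) : BinInt.Z :=
  match z with
  | Posz n => BinInt.Z.of_nat n
  | Negz n => BinInt.Z.opp (BinInt.Z.of_nat n.+1)
  end.

Definition rat_to_R (q : rat) : Rdefinitions.R :=
  Rdefinitions.Rdiv (Rdefinitions.IZR (int_to_Z (numq q)))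
                    (Rdefinitions.IZR (int_to_Z (denq q))).

Definition dense_in_R_ge1 (E : rat -> Prop) : Prop :=
  forall p eps : Rdefinitions.R,
    Rdefinitions.Rle (Rdefinitions.IZR (BinNums.Zpos BinNums.xH)) p ->
    Rdefinitions.Rlt (Rdefinitions.IZR BinNums.Z0) eps ->
    exists q, E q /\
      Rdefinitions.Rlt (Rbasic_fun.Rabs (Rdefinitions.Rminus (rat_to_R q) p)) eps.

(* Main.v *)
Require Import Defs.
From HB Require Import structures.
From mathcomp Require Import all_boot all_order all_algebra.
From mathcomp Require Import zify ring.
Set Implicit Arguments. Unset Strict Implicit. Unset Printing Implicit Defensive.
Import Order.TTheory GRing.Theory Num.Theory.

Lemma cancel_mod_aux A X c d Y1 Y2 : coprime A X -> d < A -> c <= d ->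
  c * X + A * Y1 = d * X + A * Y2 -> c = d.
Proof.
move=> cAX dA cd E.
have hd : A %| (d - c) * X.
  rewrite mulnBl; have -> : d * X - c * X = A * (Y1 - Y2).
    rewrite mulnBr; lia.
  exact: dvdn_mulr.
rewrite Gauss_dvdl // in hd.
case: (posnP (d - c)) => h0; first by lia.
have := dvdn_leq h0 hd; lia.
Qed.

Lemma cancel_mod A X c d Y1 Y2 : coprime A X -> c < A -> d < A ->
  c * X + A * Y1 = d * X + A * Y2 -> c = d.
Proof.
move=> cAX cA dA E; case: (leqP c d) => h.
  exact: (cancel_mod_aux cAX dA h E).
apply/esym; exact: (cancel_mod_aux cAX cA (ltnW h) (esym E)).
Qed.

Section W.
Variables (A B : nat).
Definition W (c : nat -> nat) n := \sum_(i < n) c i * A ^ i * B ^ (n - i.+1).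

Lemma W0 c : W c 0 = 0.
Proof. by rewrite /W big_ord0. Qed.

Lemma W_recl c n : W c n.+1 = c 0 * B ^ n + A * W (fun i => c i.+1) n.
Proof.
rewrite /W big_ord_recl /= subn1 /=; congr (_ + _).
  by rewrite expn0 muln1.
rewrite big_distrr; apply: eq_bigr => i _ /=.
rewrite /bump /= add1n subSS expnS; lia.
Qed.

Lemma W_recr c n : W c n.+1 = B * W c n + c n * A ^ n.
Proof.
rewrite /W big_ord_recr /= subnn expn0 muln1; congr (_ + _).
rewrite big_distrr; apply: eq_bigr => i _ /=.
have hi := ltn_ord i.
rewrite subSS (_ : n - i = (n - i.+1).+1); last by lia.
rewrite expnS; lia.
Qed.

Hypothesis cAB : coprime A B.
Hypothesis A0 : 0 < A.
Hypothesis B0 : 0 < B.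

Lemma U1 n : forall c d, W c n = W d n ->
  (forall i, i.+1 < n -> c i < A /\ d i < A) -> forall i, i < n -> c i = d i.
Proof.
elim: n => [|n IH] c d E H i //.
rewrite !W_recl in E.
have e0 : c 0 = d 0.
  case: n IH E H => [|n] IH E H.
    rewrite !W0 !muln0 !addn0 expn0 !muln1 in E; exact: E.
  have [h1 h2] := H 0 isT.
  apply: (cancel_mod (X := B ^ n.+1) _ h1 h2 E).
  exact: coprimeXr.
rewrite e0 in E; move/addnI/eqP: E; rewrite eqn_mul2l (negbTE (lt0n_neq0 A0)) /= => /eqP E.
case: i => [//|i] hi.
apply: (IH (fun i => c i.+1) (fun i => d i.+1) E) => //.
by move=> j hj; apply: H.
Qed.

Lemma U2 n : forall c d, W c n = W d n ->
  (forall i, 0 < i -> i.+1 < n.+1 -> c i < B /\ d i < B) -> forall i, i < n -> c i = d i.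
Proof.
elim: n => [|n IH] c d E H i //.
rewrite !W_recr in E.
have en : c n = d n.
  case: n IH E H => [|n] IH E H.
    rewrite !W0 !muln0 !add0n expn0 !muln1 in E; exact: E.
  have [h1 h2] := H n.+1 isT (leqnn _).
  rewrite ![B * _ + _]addnC in E.
  apply: (cancel_mod (X := A ^ n.+1) _ h1 h2 E).
  by apply: coprimeXr; rewrite coprime_sym.
rewrite en in E; move/addIn/eqP: E; rewrite eqn_mul2l (negbTE (lt0n_neq0 B0)) /= => /eqP E.
rewrite ltnS leq_eqVlt => /orP [/eqP -> //|hi].
apply: (IH c d E) => // j hj1 hj2; apply: H => //; lia.
Qed.
End W.

Local Open Scope ring_scope.

Lemma sum_cnt (V : nmodType) (F : nat -> V) (e : seq nat) n :
  all (fun x => x < n)%N e -> \sum_(x <- e) F x = \sum_(i < n) F i *+ count_mem (i : nat) e.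
Proof.
elim: e => [|x e IH] /=.
  by move=> _; rewrite big_nil big1 // => i _; rewrite mulr0n.
move=> /andP [xn he]; rewrite big_cons IH //.
under eq_bigr => i _ do rewrite mulrnDr.
rewrite big_split /=; congr (_ + _).
rewrite (bigD1 (Ordinal xn)) //= eqxx mulr1n big1 ?addr0 // => i /negbTE.
by rewrite -val_eqE /= eq_sym => ->; rewrite mulr0n.
Qed.

Lemma size_cnt (e : seq nat) n :
  all (fun x => x < n)%N e -> size e = (\sum_(i < n) count_mem (i : nat) e)%N.
Proof.
elim: e => [|x e IH] /=.
  by move=> _; rewrite big1.
move=> /andP [xn he]; rewrite big_split /= -IH //.
rewrite (bigD1 (Ordinal xn)) //= eqxx big1 // => i /negbTE.
by rewrite -val_eqE /= eq_sym => ->.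
Qed.

Lemma mem_le_sumn (e : seq nat) x : x \in e -> (x <= sumn e)%N.
Proof.
elim: e => [//|y e IH] /=; rewrite in_cons => /orP [/eqP ->|h].
  exact: leq_addr.
exact: leq_trans (IH h) (leq_addl _ _).
Qed.

Definition sv (r : rat) (e : seq nat) := \sum_(x <- e) r ^+ x.

Section R.
Variables (r : rat) (A B : nat).
Hypothesis hrAB : r = A%:R / B%:R.
Hypothesis cAB : coprime A B.
Hypothesis A0 : (0 < A)%N.
Hypothesis B0 : (0 < B)%N.

Lemma val_W (e : seq nat) n : all (fun x => x < n.+1)%N e ->
  (W A B (fun i => count_mem i e) n.+1)%:R = sv r e * (B%:R) ^+ n.
Proof.
move=> he; rewrite /sv (sum_cnt _ he) mulr_suml /W natr_sum.
apply: eq_bigr => i _.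
have hi : (i <= n)%N by have := ltn_ord i; lia.
rewrite subSS hrAB expr_div_n -mulr_natl !natrM !natrX.
move: hi; move: (nat_of_ord i) => k hk.
rewrite -(subnKC hk) exprD addKn.
have hB : (B%:R : rat) ^+ k != 0 by rewrite expf_neq0 // pnatr_eq0 -lt0n.
field; exact: hB.
Qed.

Lemma all_lt_sumn (e e' : seq nat) : all (fun x => x < (sumn (e ++ e')).+1)%N e.
Proof.
apply/allP => x hx; rewrite ltnS; apply: mem_le_sumn; by rewrite mem_cat hx.
Qed.

Lemma eq_size_U1 e e' : sv r e = sv r e' ->
  (forall i, count_mem i e < A)%N -> (forall i, count_mem i e' < A)%N -> size e = size e'.
Proof.
move=> E h1 h2.
set N := sumn (e ++ e').
have he : all (fun x => x < N.+1)%N e by exact: all_lt_sumn.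
have he' : all (fun x => x < N.+1)%N e'.
  by rewrite /N sumn_cat addnC -sumn_cat; exact: all_lt_sumn.
have EW : W A B (fun i => count_mem i e) N.+1 = W A B (fun i => count_mem i e') N.+1.
  by apply/eqP; rewrite -(eqr_nat rat) !val_W // E.
have := U1 cAB A0 EW (fun i _ => conj (h1 i) (h2 i)) => C.
rewrite (size_cnt he) (size_cnt he'); apply: eq_bigr => i _; exact: C.
Qed.

Lemma eq_size_U2 e e' : sv r e = sv r e' ->
  (forall i, 0 < i -> count_mem i e < B)%N -> (forall i, 0 < i -> count_mem i e' < B)%N ->
  size e = size e'.
Proof.
move=> E h1 h2.
set N := sumn (e ++ e').
have he : all (fun x => x < N.+1)%N e by exact: all_lt_sumn.
have he' : all (fun x => x < N.+1)%N e'.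
  by rewrite /N sumn_cat addnC -sumn_cat; exact: all_lt_sumn.
have EW : W A B (fun i => count_mem i e) N.+1 = W A B (fun i => count_mem i e') N.+1.
  by apply/eqP; rewrite -(eqr_nat rat) !val_W // E.
have := U2 cAB A0 B0 EW (fun i hi _ => conj (h1 i hi) (h2 i hi)) => C.
rewrite (size_cnt he) (size_cnt he'); apply: eq_bigr => i _; exact: C.
Qed.
End R.


Lemma extract (e : seq nat) k c : (c <= count_mem k e)%N ->
  exists e0, perm_eq e (nseq c k ++ e0).
Proof.
elim: c e => [|c IH] e h; first by exists e.
have hk : k \in e by rewrite -has_pred1 has_count; lia.
have p1 := perm_to_rem hk.
have : (c <= count_mem k (rem k e))%N.
  move: h; rewrite (permP p1) /= eqxx; lia.
move=> /IH [e0 p2]; exists e0.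
apply: (perm_trans p1); rewrite /=.
by rewrite perm_cons.
Qed.

Section P.
Variable r : rat.
Hypothesis hr : 0 < r.

Lemma sv_cons x e : sv r (x :: e) = r ^+ x + sv r e.
Proof. by rewrite /sv big_cons. Qed.

Lemma sv_cat e e' : sv r (e ++ e') = sv r e + sv r e'.
Proof. by rewrite /sv big_cat. Qed.

Lemma sv_nseq c k : sv r (nseq c k) = c%:R * r ^+ k.
Proof.
elim: c => [|c IH]; first by rewrite /sv big_nil mul0r.
by rewrite /= sv_cons IH -addn1 natrD; ring.
Qed.

Lemma sv_ge0 e : 0 <= sv r e.
Proof. by apply: sumr_ge0 => i _; apply: exprn_ge0; apply: ltW. Qed.

Lemma sv_gt0 e : e != [::] -> 0 < sv r e.
Proof.
case: e => [//|x e] _; rewrite sv_cons.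
by apply: ltr_wpDr; [exact: sv_ge0 | exact: exprn_gt0].
Qed.

Lemma sv_perm e e' : perm_eq e e' -> sv r e = sv r e'.
Proof. by move=> h; rewrite /sv (perm_big _ h). Qed.

Lemma atom_pow a : atom r a -> exists k, a = r ^+ k.
Proof.
move=> [[s ->] [nz H]].
case: s nz H => [|x [|y t]] nz H.
- by rewrite big_nil eqxx in nz.
- by exists x; rewrite big_cons big_nil addr0.
- exfalso.
  have := H (r ^+ x) (\sum_(n <- y :: t) r ^+ n).
  case.
  + by exists [:: x]; rewrite big_cons big_nil addr0.
  + by exists (y :: t).
  + by rewrite big_cons.
  + by move/eqP; rewrite expf_eq0 (gt_eqF hr) andbF.
  + by move/eqP; rewrite gt_eqF //; apply: (sv_gt0 (e := y :: t)).
Qed.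

Lemma fact_exps x s : is_factorization r x s ->
  exists e, s = map (fun k => r ^+ k) e /\ x = sv r e.
Proof.
move=> [ha ->]; elim: s ha => [|a s IH] ha.
  by exists [::]; rewrite /sv !big_nil.
have [k ->] := atom_pow (ha a (mem_head _ _)).
have [e [-> _]] : exists e, s = map (fun k => r ^+ k) e /\ \sum_(a <- s) a = sv r e.
  by apply: IH => b hb; apply: ha; rewrite in_cons hb orbT.
exists (k :: e); split => //.
by rewrite big_cons sv_cons /sv big_map.
Qed.

Lemma in_L_exps x l : in_L r x l -> exists e, size e = l /\ x = sv r e.
Proof.
move=> [s [hf hs]]; have [e [he ->]] := fact_exps hf.
by exists e; rewrite -hs he size_map.
Qed.

Lemma exps_in_L x e : (forall k, atom r (r ^+ k)) -> x = sv r e -> in_L r x (size e).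
Proof.
move=> hat ->; exists (map (fun k => r ^+ k) e); split; last by rewrite size_map.
split; first by move=> a /mapP [k _ ->].
by rewrite big_map.
Qed.

End P.

Section Q.
Variables (r : rat) (A B : nat).
Hypothesis hrAB : r = A%:R / B%:R.
Hypothesis B0 : (0 < B)%N.

Lemma rel k : A%:R * r ^+ k = B%:R * r ^+ k.+1.
Proof.
rewrite exprS hrAB mulrA mulrCA divff ?mulr1 //.
by rewrite pnatr_eq0 -lt0n.
Qed.

Lemma move_gen e k c k' c' : (c <= count_mem k e)%N -> c%:R * r ^+ k = c'%:R * r ^+ k' ->
  exists e', sv r e' = sv r e /\ size e' = (size e - c + c')%N /\ (c' <= count_mem k' e')%N.
Proof.
move=> h E; have [e0 p] := extract h; exists (nseq c' k' ++ e0); split; [|split].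
- by rewrite (sv_perm r p) !sv_cat !sv_nseq E.
- by rewrite (perm_size p) !size_cat !size_nseq addKn addnC.
- by rewrite /= count_cat count_nseq /= eqxx mul1n leq_addr.
Qed.

Lemma move_up e k : (A <= count_mem k e)%N ->
  exists e', sv r e' = sv r e /\ size e' = (size e - A + B)%N /\ (B <= count_mem k.+1 e')%N.
Proof. move=> h; apply: move_gen h _; exact: rel. Qed.

Lemma move_down e k : (B <= count_mem k.+1 e)%N ->
  exists e', sv r e' = sv r e /\ size e' = (size e - B + A)%N /\ (A <= count_mem k e')%N.
Proof. move=> h; apply: move_gen h _; by rewrite rel. Qed.
End Q.

Section At.
Variables (r : rat) (A B : nat).
Hypothesis hr : 0 < r.
Hypothesis hrAB : r = A%:R / B%:R.
Hypothesis cAB : coprime A B.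
Hypothesis A0 : (0 < A)%N.
Hypothesis B0 : (0 < B)%N.

Lemma sv_lt_mem t x : x \in t -> (1 < size t)%N -> r ^+ x < sv r t.
Proof.
move=> hx hs; rewrite (sv_perm r (perm_to_rem hx)) sv_cons.
rewrite ltrDl; apply: sv_gt0 => //.
have := size_rem hx; case: (rem x t) => [|y s] //= h; have := prednK (ltnW hs); rewrite -h => e1; by rewrite -e1 in hs.
Qed.

Lemma atom_split k : in_S r (r ^+ k) /\ r ^+ k != 0 /\
  (forall t, (1 < size t)%N -> sv r t = r ^+ k -> False) -> atom r (r ^+ k).
Proof.
move=> [h1 [h2 H]]; split => //; split => //.
move=> u v [s1 ->] [s2 ->] E.
case: (altP (s1 =P [::])) => [-> |n1]; first by left; rewrite big_nil.
case: (altP (s2 =P [::])) => [-> |n2]; first by right; rewrite big_nil.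
exfalso; apply: (H (s1 ++ s2)); last by rewrite sv_cat E.
rewrite size_cat; case: s1 n1 {E} => // x s1 _; case: s2 n2 => // y s2 _ /=; lia.
Qed.

Lemma atom_gt1 k : 1 < r -> (1 < B)%N -> atom r (r ^+ k).
Proof.
move=> r1 B1; apply: atom_split; split; first by exists [:: k]; rewrite big_cons big_nil addr0.
split; first by rewrite expf_neq0 // gt_eqF.
move=> t hs Et.
have hlt : forall x, x \in t -> (x < k)%N.
  by move=> x hx; rewrite -(ltr_eXn2l r1) -Et; apply: sv_lt_mem.
have ht : all (fun x => x < k.+1)%N t by apply/allP => x /hlt; lia.
have hk : all (fun x => x < k.+1)%N [:: k] by rewrite /= ltnSn.
have EW : W A B (fun i => count_mem i t) k.+1 = W A B (fun i => count_mem i [:: k]) k.+1.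
  apply/eqP; rewrite -(eqr_nat rat) !(val_W hrAB) //.
  by rewrite Et /sv big_cons big_nil addr0.
rewrite !W_recr in EW.
have c0 : count_mem k t = 0%N.
  by apply/eqP; rewrite -leqn0 leqNgt -has_count has_pred1; apply/negP => /hlt; rewrite ltnn.
rewrite c0 /= eqxx addn0 in EW.
rewrite addnC [X in _ = X]addnC in EW.
have cp : coprime B (A ^ k) by apply: coprimeXr; rewrite coprime_sym.
by have := cancel_mod (c := 0) (d := 1) cp B0 B1 EW.
Qed.

Lemma atom_lt1 k : r < 1 -> (1 < A)%N -> atom r (r ^+ k).
Proof.
move=> r1 A1; apply: atom_split; split; first by exists [:: k]; rewrite big_cons big_nil addr0.
split; first by rewrite expf_neq0 // gt_eqF.
move=> t hs Et.
have hgt : forall x, x \in t -> (k < x)%N.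
  by move=> x hx; rewrite -(ltr_iXn2l hr r1) -Et; apply: sv_lt_mem.
set t' := map (subn^~ k) t.
have Et' : sv r t' = r ^+ 0.
  apply: (mulfI (x := r ^+ k)); first by rewrite expf_neq0 // gt_eqF.
  rewrite expr0 mulr1; apply: etrans _ Et.
  rewrite /sv big_map mulr_sumr big_seq [RHS]big_seq.
  by apply: eq_bigr => x /hgt hx; rewrite -exprD subnKC // ltnW.
have h0 : forall x, x \in t' -> (0 < x)%N.
  by move=> x /mapP [y /hgt hy ->]; lia.
set N := sumn (t' ++ [:: 0%N]).
have ht : all (fun x => x < N.+1)%N t' by exact: all_lt_sumn.
have hk : all (fun x => x < N.+1)%N [:: 0%N] by [].
have EW : W A B (fun i => count_mem i t') N.+1 = W A B (fun i => count_mem i [:: 0%N]) N.+1.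
  apply/eqP; rewrite -(eqr_nat rat) !(val_W hrAB) //.
  by rewrite Et' /sv big_cons big_nil addr0.
rewrite !W_recl in EW.
have c0 : count_mem 0%N t' = 0%N.
  by apply/eqP; rewrite -leqn0 leqNgt -has_count has_pred1; apply/negP => /h0; rewrite ltnn.
rewrite c0 /= in EW.
have cp : coprime A (B ^ N) by apply: coprimeXr.
by have := cancel_mod (c := 0) (d := 1) cp A0 A1 EW.
Qed.
End At.


Lemma rat_AB (r : rat) : 0 < r ->
  r = (`|numq r|%N)%:R / (`|denq r|%N)%:R /\ coprime `|numq r| `|denq r| /\
  (0 < `|numq r|)%N /\ (0 < `|denq r|)%N.
Proof.
move=> hr; have n0 : 0 < numq r by rewrite numq_gt0.
have d0 := denq_gt0 r.
split; last split; last split.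
- by rewrite !natr_absz !ger0_norm ?ltW // divq_num_den.
- exact: coprime_num_den.
- by rewrite absz_gt0 gt_eqF.
- by rewrite absz_gt0 gt_eqF.
Qed.

Lemma int_atom (r : rat) (n : nat) : r = n%:R -> (0 < n)%N -> forall a, atom r a -> a = 1.
Proof.
move=> rn n0 a ha.
have hr : 0 < r by rewrite rn ltr0n.
have [k ek] := atom_pow hr ha.
case: k ek => [|k] ek; first by rewrite ek expr0.
case: n rn n0 => [//|[|n]] rn _; first by rewrite ek rn expr1n.
exfalso; move: ha => [_ [nz H]].
have e1 : a = 1 + (n.+2 ^ k.+1 - 1)%N%:R.
  by rewrite ek rn -natrX nat1r subn1 prednK // expn_gt0.
have := H 1 (n.+2 ^ k.+1 - 1)%N%:R.
case.
- by exists [:: 0%N]; rewrite big_cons big_nil addr0 expr0.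
- exists (nseq (n.+2 ^ k.+1 - 1) 0%N); have := sv_nseq r (n.+2 ^ k.+1 - 1) 0.
  by rewrite expr0 mulr1.
- exact: e1.
- by move/eqP; rewrite oner_eq0.
- move/eqP; rewrite pnatr_eq0 subn_eq0 leqNgt => /negP; apply.
  have h := expn_gt0 n.+2 k; rewrite expnS; nia.
Qed.

Section Lt1.
Variables (r : rat) (A B : nat).
Hypothesis hr : 0 < r.
Hypothesis hrAB : r = A%:R / B%:R.
Hypothesis cAB : coprime A B.
Hypothesis A0 : (0 < A)%N.
Hypothesis B0 : (0 < B)%N.
Hypothesis hAB : (A <= B)%N.

Lemma iter_up j e : (exists k, A <= count_mem k e)%N ->
  exists e', sv r e' = sv r e /\ size e' = (size e + j * (B - A))%N.
Proof.
elim: j e => [|j IH] e [k hk]; first by exists e; rewrite mul0n addn0.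
have hs : (A <= size e)%N := leq_trans hk (count_size _ _).
have [e1 [s1 [z1 c1]]] := move_up hrAB B0 hk.
have [e2 [s2 z2]] := IH e1 (ex_intro _ k.+1 (leq_trans hAB c1)).
exists e2; split; first by rewrite s2.
rewrite z2 z1 mulSn; lia.
Qed.

Lemma counts_lt_A x hi e : (1 < A)%N -> r < 1 ->
  (forall l, in_L r x l -> l <= hi)%N -> sv r e = x -> forall k, (count_mem k e < A)%N.
Proof.
move=> A1 r1 hb ex k; rewrite ltnNge; apply/negP => hk.
have [e' [s' z']] := iter_up hi.+1 (ex_intro _ k hk).
have := hb _ (exps_in_L (fun k => atom_lt1 hr hrAB cAB A0 B0 k r1 A1) (esym (etrans s' ex))).
rewrite z' mulSn.
have : (0 < B - A)%N.
  have : (A < B)%N.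
    rewrite ltn_neqAle hAB andbT; apply/eqP => eAB.
    by move: r1; rewrite hrAB eAB divff ?ltxx // pnatr_eq0 -lt0n.
  lia.
nia.
Qed.
End Lt1.

Lemma not_atom_A1 (r : rat) A B k : 0 < r -> r = A%:R / B%:R -> (0 < B)%N -> A = 1%N -> (1 < B)%N ->
  ~ atom r (r ^+ k).
Proof.
move=> hr hrAB B0 A1 B1 [_ [_ H]].
have E : r ^+ k = r ^+ k.+1 + (B - 1)%N%:R * r ^+ k.+1.
  have := rel hrAB B0 k; rewrite A1 mul1r => ->.
  by rewrite -{1}(subnK (ltnW B1)) natrD; ring.
have := H (r ^+ k.+1) ((B - 1)%N%:R * r ^+ k.+1).
case.
- by exists [:: k.+1]; rewrite big_cons big_nil addr0.
- by exists (nseq (B - 1) k.+1); rewrite -sv_nseq.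
- exact: E.
- by move/eqP; rewrite expf_eq0 gt_eqF // andbF.
- move/eqP; rewrite mulf_eq0 expf_eq0 (gt_eqF hr) andbF orbF pnatr_eq0 subn_eq0 leqNgt B1.
  by [].
Qed.

Lemma lt1_one r q : 0 < r -> r < 1 -> finite_elasticity r q -> q = 1.
Proof.
move=> hr r1 [x [_ [[_ ->] // | [nz [lo [hi [hlo hhi hb ->]]]]]]].
have [hrAB [cAB [A0 B0]]] := rat_AB hr.
move: hrAB cAB A0 B0; set A := `|numq r|%N; set B := `|denq r|%N => hrAB cAB A0 B0.
have hAB : (A < B)%N.
  have : (A%:R : rat) < B%:R.
    by rewrite -(mul1r B%:R) -ltr_pdivrMr ?ltr0n // -hrAB.
  by rewrite ltr_nat.
have lo0 : lo <> 0%N.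
  move=> l0; move: hlo; rewrite l0 => [[s [[_ xs] /size0nil s0]]].
  by move: nz; rewrite xs s0 big_nil eqxx.
case: (ltngtP A 1) => [|A1|A1]; first by lia.
- have [e1 [s1 x1]] := in_L_exps hr hlo.
  have [e2 [s2 x2]] := in_L_exps hr hhi.
  have hb' : forall l, in_L r x l -> (l <= hi)%N by move=> l /hb /andP [].
  have c1 := counts_lt_A hr hrAB cAB A0 B0 (ltnW hAB) A1 r1 hb' (esym x1).
  have c2 := counts_lt_A hr hrAB cAB A0 B0 (ltnW hAB) A1 r1 hb' (esym x2).
  have := eq_size_U1 hrAB cAB A0 B0 (etrans (esym x1) x2) c1 c2.
  rewrite s1 s2 => <-; rewrite divff // pnatr_eq0; exact/eqP.
- exfalso; move: hhi => [s [[ha xs] _]].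
  case: s ha xs => [|a s] ha xs; first by move: nz; rewrite xs big_nil eqxx.
  have [k ek] := atom_pow hr (ha a (mem_head _ _)).
  apply: (not_atom_A1 (k := k) hr hrAB B0 A1); first by rewrite -A1.
  by rewrite -ek; apply: ha; exact: mem_head.
Qed.


Lemma bern (A B m : nat) : (B <= A)%N -> (B ^ m * (B + m * (A - B)) <= A ^ m * B)%N.
Proof.
move=> hBA; elim: m => [|m IH]; first by rewrite !expn0 mul0n addn0.
have h1 : (B ^ m <= A ^ m)%N.
  by case: m IH => [|m] _; [rewrite !expn0 | rewrite leq_exp2r].
rewrite !expnS.
move: IH h1; set X := (B ^ m)%N; set Y := (A ^ m)%N => IH h1.
have -> : A = (B + (A - B))%N by lia.
move: (A - B)%N IH => d; rewrite addKn => IH.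
have h2 : (B * (X * (B + m * d)) <= B * (Y * B))%N by rewrite leq_mul2l IH orbT.
have h3 : (B * X * d <= B * Y * d)%N by rewrite leq_mul2r leq_mul2l h1 !orbT.
nia.
Qed.

Lemma pow_grow (A B P : nat) : (0 < B)%N -> (B < A)%N -> exists m, (P.+1 * B ^ m <= A ^ m)%N.
Proof.
move=> B0 hBA; exists (P * B)%N.
have := bern (P * B) (ltnW hBA).
set X := (B ^ (P * B))%N; set Y := (A ^ (P * B))%N => h.
have : (B * (P.+1 * X) <= B * Y)%N.
  apply: leq_trans _ (_ : Y * B <= _)%N; last by rewrite mulnC.
  apply: leq_trans _ h.
  have : (1 <= A - B)%N by lia.
  nia.
by rewrite leq_mul2l (gtn_eqF B0).
Qed.


Lemma hasN_A (A : nat) (e : seq nat) : (0 < A)%N -> ~~ has (fun k => A <= count_mem k e)%N e ->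
  forall k, (count_mem k e < A)%N.
Proof.
move=> A0 /hasPn h k; case: (boolP (k \in e)) => hk.
  by have := h k hk; rewrite -ltnNge.
by rewrite (count_memPn hk).
Qed.

Lemma hasN_B (B : nat) (e : seq nat) : (0 < B)%N -> ~~ has (fun k => (0 < k) && (B <= count_mem k e))%N e ->
  forall k, (0 < k)%N -> (count_mem k e < B)%N.
Proof.
move=> B0 /hasPn h k k0; case: (boolP (k \in e)) => hk.
  by have := h k hk; rewrite k0 /= -ltnNge.
by rewrite (count_memPn hk).
Qed.

Section Gt1.
Variables (r : rat) (A B : nat).
Hypothesis hr : 0 < r.
Hypothesis hrAB : r = A%:R / B%:R.
Hypothesis cAB : coprime A B.
Hypothesis A0 : (0 < A)%N.
Hypothesis B0 : (0 < B)%N.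
Hypothesis B1 : (1 < B)%N.
Hypothesis hBA : (B < A)%N.
Hypothesis r1 : 1 < r.

Let atoms k : atom r (r ^+ k) := atom_gt1 hr hrAB cAB A0 B0 k r1 B1.

Lemma reduce_min n e : (size e <= n)%N -> exists f, sv r f = sv r e /\ (size f <= size e)%N /\
  forall k, (count_mem k f < A)%N.
Proof.
elim: n e => [|n IH] e hs.
  move: hs; rewrite leqn0 => /nilP ->; exists [::]; split => //; split => // k.
case: (boolP (has (fun k => A <= count_mem k e)%N e)) => [/hasP [k _ hk]|hN].
  have hse : (A <= size e)%N := leq_trans hk (count_size _ _).
  have [e1 [s1 [z1 _]]] := move_up hrAB B0 hk.
  have [|f [sf [zf cf]]] := IH e1; first by rewrite z1; set S := size e in hs hse *; lia.
  exists f; split; first by rewrite sf.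
  split => //; rewrite (leq_trans zf) // z1; set S := size e in hse *; lia.
by exists e; split => //; split => //; exact: hasN_A.
Qed.

Lemma min_bound f x : sv r f = x -> (forall k, count_mem k f < A)%N ->
  forall l, in_L r x l -> (size f <= l)%N.
Proof.
move=> fx cf l; elim/ltn_ind: l => l IH hl.
have [e [se xe]] := in_L_exps hr hl.
subst l.
case: (boolP (has (fun k => A <= count_mem k e)%N e)) => [/hasP [k _ hk]|hN].
  have hse : (A <= size e)%N := leq_trans hk (count_size _ _).
  have [e1 [s1 [z1 _]]] := move_up hrAB B0 hk.
  have hl1 : in_L r x (size e1) by apply: exps_in_L atoms _; rewrite s1.
  have lt1 : (size e1 < size e)%N by rewrite z1; set S := size e in hse *; lia.
  have := IH _ lt1 hl1.
  rewrite z1 => h; set S := size e in hse h *; lia.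
 apply/eq_leq/(eq_size_U1 hrAB cAB A0 B0) => //.
  by rewrite fx.
exact: hasN_A.
Qed.

Lemma len_le x l : in_L r x l -> l%:R <= x.
Proof.
move=> hl; have [e [<- ->]] := in_L_exps hr hl.
elim: e => [|k e IH]; first by rewrite /sv big_nil.
rewrite sv_cons /= -addn1 natrD addrC lerD //.
by apply: exprn_ege1; apply: ltW.
Qed.

Lemma max_bound g x M : sv r g = x -> (forall k, 0 < k -> count_mem k g < B)%N ->
  (forall l, in_L r x l -> l <= M)%N -> forall l, in_L r x l -> (l <= size g)%N.
Proof.
move=> gx cg hM l hl.
move: {2}(M - l)%N (erefl (M - l)%N) => d; elim/ltn_ind: d l hl => d IH l hl hd.
have [e [se xe]] := in_L_exps hr hl.
subst l.
case: (boolP (has (fun k => (0 < k) && (B <= count_mem k e))%N e)) => [/hasP [k _ /andP [k0 hk]]|hN].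
  have hse : (B <= size e)%N := leq_trans hk (count_size _ _).
  case: k k0 hk => // k _ hk.
  have [e1 [s1 [z1 _]]] := move_down hrAB B0 hk.
  have hl1 : in_L r x (size e1) by apply: exps_in_L atoms _; rewrite s1.
  have hM1 := hM _ hl1.
  rewrite z1 in hM1.
  have lt1 : (M - size e1 < d)%N by rewrite -hd z1; set S := size e in hse hM1 *; lia.
  have := IH _ lt1 _ hl1 (erefl _).
  rewrite z1 => h; set S := size e in hse h *; lia.
apply/eq_leq/(eq_size_U2 hrAB cAB A0 B0) => //.
  by rewrite gx.
exact: hasN_B.
Qed.

Lemma r_le_A : r <= A%:R.
Proof.
rewrite hrAB ler_pdivrMr ?ltr0n // ler_peMr ?ler0n //.
by rewrite ler1n.
Qed.

Lemma len_bound e : forall l, in_L r (sv r e) l -> (l <= \sum_(k <- e) A ^ k)%N.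
Proof.
move=> l hl; rewrite -(ler_nat rat); apply: le_trans (len_le hl) _.
rewrite natr_sum; apply: ler_sum => k _; rewrite natrX.
apply: lerXn2r; [by rewrite nnegrE ltW | by rewrite nnegrE ler0n | exact: r_le_A].
Qed.

Lemma elast_family K m : (0 < K)%N -> exists g0, (g0 <= K * B ^ m)%N /\
  forall s, finite_elasticity r ((K * A ^ m + s)%N%:R / (g0 + s)%N%:R).
Proof.
move=> K0.
set N := (K * A ^ m)%N.
have hf0 : sv r (nseq (K * B ^ m) m) = N%:R.
  rewrite sv_nseq hrAB expr_div_n /N !natrM !natrX.
  have hB : (B%:R : rat) ^+ m != 0 by rewrite expf_neq0 // pnatr_eq0 -lt0n.
  by field.
have [f [sf [zf cf]]] := reduce_min (leqnn (size (nseq (K * B ^ m) m))).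
exists (size f); split; first by rewrite size_nseq in zf.
move=> s.
set H := (sumn f).+1.
have fH : forall k, k \in f -> (k < H)%N by move=> k hk; rewrite ltnS mem_le_sumn.
set Xmin := f ++ iota H s.
set Xmax := nseq N 0%N ++ iota H s.
have eX : sv r Xmin = sv r Xmax by rewrite !sv_cat sf hf0 sv_nseq expr0 mulr1.
have A1 : (1 < A)%N by apply: leq_trans B1 (ltnW hBA).
have cmin : forall k, (count_mem k Xmin < A)%N.
  move=> k; rewrite count_cat (count_uniq_mem _ (iota_uniq H s)) mem_iota.
  case: (ltnP k H) => hk.
    by rewrite /= addn0; exact: cf.
  rewrite (count_memPn (_ : k \notin f)); last by apply/negP => /fH; rewrite ltnNge hk.
  by rewrite add0n /=; case: (k < H + s)%N => /=; [apply: leq_trans A1 | ].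
have cmax : forall k, (0 < k)%N -> (count_mem k Xmax < B)%N.
  move=> k k0; rewrite count_cat count_nseq (count_uniq_mem _ (iota_uniq H s)).
  rewrite (_ : pred1 k 0 = false) ?mul0n ?add0n; last by case: k k0.
  by case: (_ \in _).
have N0 : (0 < N)%N by rewrite /N muln_gt0 K0 expn_gt0 A0.
exists (sv r Xmax); split; first by exists Xmax.
right; split.
  rewrite gt_eqF // /Xmax sv_cat sv_nseq expr0 mulr1.
  by apply: ltr_wpDr; [exact: sv_ge0 | rewrite ltr0n].
exists (size f + s)%N, (N + s)%N; split.
- have := exps_in_L (x := sv r Xmax) atoms (esym eX).
  by rewrite /Xmin size_cat size_iota.
- have := exps_in_L (x := sv r Xmax) atoms (erefl _).
  by rewrite /Xmax size_cat size_nseq size_iota.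
- move=> l hl; apply/andP; split.
    by have := min_bound eX cmin hl; rewrite size_cat size_iota.
  have := max_bound (erefl _) cmax (@len_bound Xmax) hl.
  by rewrite size_cat size_nseq size_iota.
- by [].
Qed.
End Gt1.


Lemma int_inL (r : rat) (n : nat) x l : r = n%:R -> (0 < n)%N -> in_L r x l -> x = l%:R.
Proof.
move=> rn n0 [s [[ha ->] <-]].
elim: s ha => [|a s IH] ha; first by rewrite big_nil.
rewrite big_cons (int_atom rn n0 (ha a (mem_head _ _))) IH /=.
  by rewrite -addn1 natrD addrC.
by move=> b hb; apply: ha; rewrite in_cons hb orbT.
Qed.

Lemma fe_one_of (r : rat) q : (forall x lo hi, x != 0 -> in_L r x lo -> in_L r x hi ->
   (forall l, in_L r x l -> (lo <= l <= hi)%N) -> lo = hi) ->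
  finite_elasticity r q -> q = 1.
Proof.
move=> H [x [_ [[_ ->] // | [nz [lo [hi [hlo hhi hb ->]]]]]]].
have lo0 : lo <> 0%N.
  move=> l0; move: hlo; rewrite l0 => [[s [[_ xs] /size0nil s0]]].
  by move: nz; rewrite xs s0 big_nil eqxx.
rewrite -(H x lo hi nz hlo hhi hb) divff // pnatr_eq0; exact/eqP.
Qed.

Lemma int_one (r : rat) (n : nat) q : r = n%:R -> (0 < n)%N -> finite_elasticity r q -> q = 1.
Proof.
move=> rn n0; apply: fe_one_of => x lo hi _ hlo hhi _.
apply/eqP; rewrite -(eqr_nat rat) -(int_inL rn n0 hlo) -(int_inL rn n0 hhi).
exact: eqxx.
Qed.

Lemma fe_zero (r : rat) : finite_elasticity r 1.
Proof. by exists 0; split; [exists [::]; rewrite big_nil | left]. Qed.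

Definition ratfrac (a b : nat) : rat := a%:R / b%:R.

Lemma rat_frac_facts (a b : nat) : (0 < b)%N -> exists n' d' : nat,
  numq (ratfrac a b) = Posz n' /\ denq (ratfrac a b) = Posz d' /\ (0 < d')%N /\ (n' * b = a * d')%N.
Proof.
move=> b0.
set q := ratfrac a b.
have qge : 0 <= q by rewrite /q /ratfrac divr_ge0 // ler0n.
have hn : 0 <= numq q by rewrite numq_ge0.
have hd : 0 < denq q := denq_gt0 q.
have [n' En] : exists n' : nat, numq q = Posz n' by exists `|numq q|%N; rewrite gez0_abs.
have [d' Ed] : exists d' : nat, denq q = Posz d' by exists `|denq q|%N; rewrite gez0_abs // ltW.
have d0 : (0 < d')%N by move: hd; rewrite Ed ltz_nat.
exists n', d'; split => //; split => //; split => //.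
apply/eqP; rewrite -(eqr_nat rat) !natrM; apply/eqP.
have := divq_num_den q; rewrite En Ed /q /ratfrac => h.
have hb : (b%:R : rat) != 0 by rewrite pnatr_eq0 -lt0n.
have hd' : (d'%:R : rat) != 0 by rewrite pnatr_eq0 -lt0n.
have : (n'%:R : rat) = a%:R / b%:R * d'%:R.
  by rewrite -h /=; field.
move=> ->; by field.
Qed.

Lemma ratfrac11 : ratfrac 1 1 = 1.
Proof. by rewrite /ratfrac divr1. Qed.

Definition one_rat : rat := 1.
Lemma ratfrac_one : ratfrac 1 1 = one_rat.
Proof. exact: ratfrac11. Qed.

From Stdlib Require Import Reals Lra ZArith.
Local Open Scope R_scope.
Local Notation "m ^ n" := (expn m n) : nat_scope.

Lemma approx (p eps D k : R) : (1 + eps <= p)%R -> (0 < eps)%R ->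
  ((p - 1) * (p - 1) / eps < D)%R -> (D / (p - 1) < k)%R -> (k <= D / (p - 1) + 1)%R ->
  (Rabs ((D + k) / k - p) < eps)%R.
Proof.
intros hp he hD hk1 hk2.
set (c := (p - 1)%R) in *.
assert (hc : (0 < c)%R) by (unfold c; lra).
assert (hc2 : (0 < c * c / eps)%R) by (apply Rdiv_lt_0_compat; nra).
assert (D0 : (0 < D)%R) by lra.
assert (hz : (0 < D / c)%R) by (apply Rdiv_lt_0_compat; lra).
assert (k0 : (0 < k)%R) by lra.
assert (e1 : (D < c * k)%R).
{ apply (Rmult_lt_compat_l c) in hk1; auto.
  replace (c * (D / c))%R with D in hk1 by (field; lra). lra. }
assert (e2 : (c * k <= D + c)%R).
{ apply (Rmult_le_compat_l c) in hk2; [|lra].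
  replace (c * (D / c + 1))%R with (D + c)%R in hk2 by (field; lra). lra. }
assert (e3 : (c * c < eps * D)%R).
{ apply (Rmult_lt_compat_l eps) in hD; auto.
  replace (eps * (c * c / eps))%R with (c * c)%R in hD by (field; lra). lra. }
assert (e4 : (c < eps * k)%R).
{ assert (c * c < c * (eps * k))%R by nra.
  apply (Rmult_lt_reg_l c); auto. }
replace ((D + k) / k - p)%R with ((D - c * k) / k)%R by (unfold c; field; lra).
rewrite Rabs_left.
- apply (Rmult_lt_reg_r k); auto.
  replace (- ((D - c * k) / k) * k)%R with (c * k - D)%R by (field; lra). lra.
- apply Rdiv_neg_pos; lra.
Qed.

Lemma rat_to_R_div (a b : nat) : (0 < b)%nat ->
  rat_to_R (ratfrac a b) = (INR a / INR b)%R.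
Proof.
move=> b0.
have [n' [d' [En [Ed [d0 E]]]]] := rat_frac_facts a b0.
rewrite /rat_to_R En Ed /= -!INR_IZR_INZ.
have hbR : (INR b <> 0)%R by apply: not_0_INR; lia.
have hdR : (INR d' <> 0)%R by apply: not_0_INR; lia.
move: E; rewrite -!multE => E.
have E' := f_equal INR E; rewrite !mult_INR in E'.
by field_simplify_eq; [lra | split].
Qed.

Lemma rat_to_R_one : rat_to_R one_rat = 1%R.
Proof.
rewrite -ratfrac_one rat_to_R_div //; simpl; field.
Qed.

Lemma dense_contra (E : rat -> Prop) : (forall q, E q -> q = one_rat) -> dense_in_R_ge1 E -> False.
Proof.
move=> one hd.
have [q [hq hab]] := hd 2 1 ltac:(lra) ltac:(lra).
rewrite (one q hq) rat_to_R_one in hab.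
move: hab; rewrite /Rabs; case: Rcase_abs => h0 h; lra.
Qed.

Lemma INR_up (z : R) : (0 < z)%R -> (z < INR (Z.to_nat (up z)) /\ INR (Z.to_nat (up z)) <= z + 1)%R.
Proof.
move=> z0; have [h1 h2] := archimed z.
have hu : (0 <= up z)%Z.
  apply: le_IZR; lra.
rewrite INR_IZR_INZ Z2Nat.id //; lra.
Qed.

Lemma dense_core (E : rat -> Prop) (A B : nat) : (0 < B)%nat -> (B < A)%nat -> E one_rat ->
  (forall K m, (0 < K)%nat -> exists g0, (g0 <= K * B ^ m)%nat /\
     forall s, E (ratfrac (K * A ^ m + s) (g0 + s))) ->
  dense_in_R_ge1 E.
Proof.
move=> B0 hBA E1 fam p eps hp he.
case: (Rlt_or_le (p - 1) eps) => hpe.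
  exists one_rat; split => //; rewrite rat_to_R_one /Rabs; case: Rcase_abs => h0; lra.
have [hP1 _] := INR_up (z := p) ltac:(lra).
set P := Z.to_nat (up p) in hP1.
have P1 : (1 <= P)%nat.
  case: P hP1 => [|n] //=; lra.
have [m hm] := pow_grow P B0 hBA.
set z0 := ((p - 1) * (p - 1) / eps)%R.
have z0p : (0 < z0)%R by rewrite /z0; apply: Rdiv_lt_0_compat => //; nra.
have [hK _] := INR_up z0p.
set K := (Z.to_nat (up z0)).+1.
have K0 : (0 < K)%nat by [].
have hK' : (z0 < INR K)%R by rewrite /K S_INR; lra.
have [g0 [hg0 hE]] := fam K m K0.
set N := (K * A ^ m)%nat.
set D := (N - g0)%nat.
have Bm : (1 <= B ^ m)%nat by rewrite expn_gt0 B0.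
have hD1 : (P * g0 <= D)%nat.
  rewrite /D /N; have : (K * (P.+1 * B ^ m) <= K * A ^ m)%nat by rewrite leq_mul2l hm orbT.
  nia.
have hD2 : (K <= D)%nat.
  rewrite /D /N; have : (K * (P.+1 * B ^ m) <= K * A ^ m)%nat by rewrite leq_mul2l hm orbT.
  nia.
have hND : N = (D + g0)%nat.
  rewrite /D subnK //; apply: leq_trans hg0 _; rewrite /N leq_mul2l.
  apply/orP; right; apply: leq_trans _ hm; exact: leq_pmull.
have RD1 : (INR P * INR g0 <= INR D)%R.
  by rewrite -mult_INR; apply: le_INR; apply/ssrnat.leP; rewrite multE.
have RD2 : (INR K <= INR D)%R by apply: le_INR; apply/ssrnat.leP.
have g0pos : (0 <= INR g0)%R by apply: pos_INR.
set z := (INR D / (p - 1))%R.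
have Dpos : (0 < INR D)%R by lra.
have zpos : (0 < z)%R by apply: Rdiv_lt_0_compat; lra.
have [hk1 hk2] := INR_up zpos.
set k := Z.to_nat (up z) in hk1 hk2.
have g0k : (g0 < k)%nat.
  apply/ssrnat.ltP; apply: INR_lt; apply: Rle_lt_trans hk1.
  rewrite /z; apply: (Rmult_le_reg_l (p - 1)); first lra.
  rewrite /Rdiv -Rmult_assoc Rinv_r_simpl_m; nra.
set s := (k - g0)%nat.
have ek : (g0 + s)%nat = k by rewrite /s subnKC // ltnW.
have eN : (K * A ^ m + s)%nat = (D + k)%nat by rewrite -/N hND -ek; lia.
exists (ratfrac (K * A ^ m + s) (g0 + s)); split; first exact: hE.
rewrite rat_to_R_div; last by rewrite ek; lia.
rewrite eN ek plus_INR.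
apply: approx; [lra | exact: he | rewrite -/z0; lra | rewrite -/z; lra | rewrite -/z; lra].
Qed.

Local Open Scope ring_scope.

Theorem corollary4p6 (r : rat) (hr : 0 < r) (hat : atomic r) :
  dense_in_R_ge1 (finite_elasticity r) <->
  (1 < r /\ ~ (exists n : nat, r = n%:R)).
Proof.
split.
- move=> hd.
  have key : (r <= 1 \/ exists n : nat, r = n%:R) -> False.
    move=> hc; apply: (dense_contra _ hd) => q hq; rewrite /one_rat.
    case: hc => [r1|[n rn]].
    + case: (ltrgtP r 1) r1 => // [r1 _|r1 _].
      * exact: lt1_one hr r1 hq.
      * by apply: (int_one (n := 1)) hq => //; rewrite r1.
    + have n0 : (0 < n)%nat by move: hr; rewrite rn ltr0n.
      exact: int_one rn n0 hq.
  split.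
    by case: (ltrP 1 r) => // h; exfalso; apply: key; left.
  by move=> ex; apply: key; right.
- move=> [r1 nint].
  have [hrAB [cAB [A0 B0]]] := rat_AB hr.
  move: hrAB cAB A0 B0; set A := absz (numq r); set B := absz (denq r) => hrAB cAB A0 B0.
  have B1 : (1 < B)%nat.
    rewrite ltn_neqAle B0 andbT; apply/eqP => eB.
    by apply: nint; exists A; rewrite hrAB -eB divr1.
  have hBA : (B < A)%nat.
    have : (B%:R : rat) < A%:R.
      by rewrite -(mul1r B%:R) -ltr_pdivlMr ?ltr0n // -hrAB.
    by rewrite ltr_nat.
  apply: (dense_core B0 hBA (fe_zero r)) => K m K0.
  exact: elast_family hr hrAB cAB A0 B0 B1 hBA r1 K m K0.
Qed.
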